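(* Let $n$ and $B$ be powers of $2$ with $2\le B\le n$. Let $\sigma$ be uniformly random among the odd integers in $[n]$ and $b$ independently uniformly random in $[n]$. Fix $f,f'\in[n]$ with $f\neq f'$ and consider $o_{f,\sigma,b}(f')$ as an element of $\{-n/2,\dots,n/2-1\}$. Then: (i) if $n/B$ does not divide $f-f'$, then $o_{f,\sigma,b}(f')$ is uniformly distributed on $\mathbb{Z}_n$; (ii) if $f-f'\equiv j\,(n/B)\pmod n$ with $j$ even, then $\Pr\{o_{f,\sigma,b}(f')=\ell\}=0$ for all integers $\ell\in[-n/B,n/B]$; (iii) if $f-f'\equiv j\,(n/B)\pmod n$ with $j$ odd, then $\Pr\{o_{f,\sigma,b}(f')=\ell\}=0$ for all integers $\ell\in[-\frac{n}{2B},\frac{n}{2B})$, and $\Pr\{o_{f,\sigma,b}(f')=\ell\}=\frac2n$ for all integers $\ell\in[-\frac nB,-\frac n{2B})\cup[\frac n{2B},\frac nB]$.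
   Context: For $\sigma,b\in[n]$: $\pi_{\sigma,b}(f)=\sigma(f-b)\bmod n$; $h_{\sigma,b}(f)=\mathrm{round}((B/n)\pi_{\sigma,b}(f))$ with $\mathrm{round}(y)=\lfloor y+1/2\rfloor$; and the offset $o_{f,\sigma,b}(f')=\pi_{\sigma,b}(f')-(n/B)h_{\sigma,b}(f)\bmod n$. Since $B$ is even, the parity of $j$ is well defined modulo $B$. *)

(* Defs.v *)
From HB Require Import structures.
From mathcomp Require Import all_boot all_order all_algebra.
Set Implicit Arguments. Unset Strict Implicit. Unset Printing Implicit Defensive.
Import Order.TTheory GRing.Theory Num.Theory.

(* [n] = {0,...,n-1}; all arithmetic below is in int (ring_scope / intdiv). *)
Local Open Scope ring_scope.

Definition perm_pi (n sigma b f : int) : int := ((sigma * (f - b)) %% n)%Z.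

Definition round (y : rat) : int := Num.floor (y + 1 / 2).

Definition hash (n B sigma b f : int) : int :=
  round ((B%:~R / n%:~R : rat) * (perm_pi n sigma b f)%:~R).

Definition offset (n B f sigma b f' : int) : int :=
  ((perm_pi n sigma b f' - (n %/ B)%Z * hash n B sigma b f) %% n)%Z.

Definition symrep (n x : int) : int :=
  let r := (x %% n)%Z in if r < (n %/ 2)%Z then r else r - n.

Definition offset_sym (n B f sigma b f' : int) : int :=
  symrep n (offset n B f sigma b f').

(* sample space: sigma uniform among odd elements of [n], b uniform in [n] *)
Definition sample_space (n : nat) : {set 'I_n * 'I_n} :=
  [set p : 'I_n * 'I_n | odd p.1].

(* Pr_{sigma,b}{ o_{f,sigma,b}(f') = l }, where the event compares the offset
   (an element of Z_n, represented in {-n/2..n/2-1}) with l viewed in Z_n. *)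
Definition prob_offset (n B f f' : nat) (l : int) : rat :=
  (#|[set p in sample_space n |
        offset_sym n B f p.1 p.2 f' == symrep n l]|)%:R
  / (#|sample_space n|)%:R.

(* Main.v *)
Require Import Defs.
From HB Require Import structures.
From mathcomp Require Import all_boot all_order all_algebra zify ring lra.
Import Order.TTheory GRing.Theory Num.Theory.
Local Open Scope ring_scope.
Definition gq (q x : int) : int := x - q * ((2*x + q) %/ (2*q))%Z.

Lemma small_mul (a d : int) : 0 < d -> - d < a * d < d -> a = 0.
Proof. move=> hd /andP[h1 h2]. nia. Qed.

Lemma dvd_small (d w : int) : 0 < d -> (d %| w)%Z -> - d < w < d -> w = 0.
Proof. move=> hd /dvdzP[k ->] h. by rewrite (@small_mul k d hd h) mul0r. Qed.

Lemma gq_win q x : 0 < q -> - q <= 2 * gq q x < q.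
Proof.
move=> hq. rewrite /gq.
have hD : 0 < 2 * q by lia.
have e := divz_eq (2*x+q) (2*q).
have h1 := modz_ge0 (2*x+q) (lt0r_neq0 hD).
have h2 := ltz_pmod (2*x+q) hD.
set h := ((2*x+q) %/ (2*q))%Z in e *.
set r := ((2*x+q) %% (2*q))%Z in e h1 h2 *.
lia.
Qed.

Lemma gq_mod q x : (q %| x - gq q x)%Z.
Proof. apply/dvdzP; exists ((2*x + q) %/ (2*q))%Z; rewrite /gq; lia. Qed.

Lemma gq_char q x y : 0 < q -> - q <= 2 * y < q -> (q %| x - y)%Z -> gq q x = y.
Proof.
move=> hq hy /dvdzP[t ht].
have hD : 0 < 2 * q by lia.
have e := divz_eq (2*x+q) (2*q).
have h1 := modz_ge0 (2*x+q) (lt0r_neq0 hD).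
have h2 := ltz_pmod (2*x+q) hD.
rewrite /gq.
set h := ((2*x+q) %/ (2*q))%Z in e *.
set r := ((2*x+q) %% (2*q))%Z in e h1 h2 *.
have : h - t = 0.
  apply: (@small_mul _ (2*q) hD). nia.
nia.
Qed.

Lemma gq_idem q x : 0 < q -> gq q (gq q x) = gq q x.
Proof.
move=> hq; apply: gq_char => //; first exact: gq_win.
by apply/dvdzP; exists 0; lia.
Qed.

Lemma gq_congr q x x' : 0 < q -> (q %| x - x')%Z -> gq q x = gq q x'.
Proof.
move=> hq hx; apply: gq_char => //; first exact: gq_win.
have := gq_mod q x'; move: hx => /dvdzP[a ha] /dvdzP[b hb].
apply/dvdzP; exists (a + b); lia.
Qed.
Lemma round_div (q B x : int) : 0 < q -> 0 < B ->
  round ((B%:~R / (q*B)%:~R : rat) * x%:~R) = ((2*x+q) %/ (2*q))%Z.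
Proof.
move=> hq hB. rewrite /round.
have hD : 0 < 2 * q by lia.
have e := divz_eq (2*x+q) (2*q).
have h1 := modz_ge0 (2*x+q) (lt0r_neq0 hD).
have h2 := ltz_pmod (2*x+q) hD.
set m := ((2*x+q) %/ (2*q))%Z in e *.
set r := ((2*x+q) %% (2*q))%Z in e h1 h2 *.
apply: floor_def.
have hq' : (q%:~R : rat) != 0 by rewrite intr_eq0 gt_eqF.
have hB' : (B%:~R : rat) != 0 by rewrite intr_eq0 gt_eqF.
have -> : (B%:~R / (q*B)%:~R : rat) * x%:~R + 1/2 = m%:~R + r%:~R / (2*q)%:~R.
  have exx : (x%:~R : rat) = ((m * (2*q) + r)%:~R - q%:~R) / 2.
    rewrite -e intrD intrM /=. field. by [].
  rewrite exx !intrM !intrD !intrM /=. field. by rewrite hq' hB'.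
have r0 : (0 : rat) <= r%:~R / (2*q)%:~R.
  by apply: divr_ge0; rewrite ler0z; lia.
have r1 : (r%:~R / (2*q)%:~R : rat) < 1.
  rewrite ltr_pdivrMr ?ltr0z // mul1r ltr_int //.
rewrite intrD lerDl r0 /= ltrD2l. exact: r1.
Qed.

Lemma dvdz_diff (n a b : int) : (n %| a - b)%Z -> (n %| a)%Z = (n %| b)%Z.
Proof.
move=> /dvdzP[k hk]; apply/idP/idP => /dvdzP[t ht]; apply/dvdzP.
  exists (t - k); lia.
exists (t + k); lia.
Qed.

Lemma symrep_mod (n x : int) : 0 < n -> (n %| symrep n x - x)%Z.
Proof.
move=> hn; have e := divz_eq x n; rewrite /symrep.
case: ifP => _; apply/dvdzP.
  exists (- (x %/ n)%Z); lia.
exists (- (x %/ n)%Z - 1); lia.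
Qed.

Lemma symrep_eq (n x y : int) : 0 < n ->
  (symrep n x == symrep n y) = (n %| x - y)%Z.
Proof.
move=> hn; apply/eqP/idP.
  move=> e; have h1 := symrep_mod n x hn; have h2 := symrep_mod n y hn.
  rewrite (@dvdz_diff _ _ ((symrep n y - y) - (symrep n x - x))).
    by rewrite rpredB.
  apply/dvdzP; exists 0; lia.
by rewrite -eqz_mod_dvd /symrep => /eqP ->.
Qed.

Lemma event_eq (q B : nat) (s b f f' l : int) : (0 < q)%N -> (0 < B)%N ->
  (offset_sym (q*B)%N B f s b f' == symrep (q*B)%N l) =
  ((q*B)%N%:Z %| gq q (perm_pi (q*B)%N s b f) - s * (f - f') - l)%Z.
Proof.
move=> hq hB.
have hn : (0 : int) < (q*B)%N by rewrite ltz_nat muln_gt0 hq hB.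
rewrite /offset_sym symrep_eq //.
apply: dvdz_diff.
rewrite /offset /hash divz_nat mulnK //.
have -> : (Posz (q*B)%N) = (q%:Z * B%:Z) by rewrite PoszM.
rewrite round_div ?ltz_nat //.
set P := perm_pi _ s b f.
set P' := perm_pi _ s b f'.
have eP : (q%:Z * B%:Z %| P - s * (f - b))%Z.
  apply/dvdzP; exists (- ((s * (f - b)) %/ (q%:Z * B%:Z))%Z).
  have := divz_eq (s * (f - b)) (q%:Z * B%:Z). rewrite /P /perm_pi ?PoszM. lia.
have eP' : (q%:Z * B%:Z %| P' - s * (f' - b))%Z.
  apply/dvdzP; exists (- ((s * (f' - b)) %/ (q%:Z * B%:Z))%Z).
  have := divz_eq (s * (f' - b)) (q%:Z * B%:Z). rewrite /P' /perm_pi ?PoszM. lia.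
set X := (P' - _ * _).
have eX := divz_eq X (q%:Z * B%:Z).
move: eP eP' => /dvdzP[a ha] /dvdzP[c hc].
apply/dvdzP; exists (- (X %/ (q%:Z * B%:Z))%Z + c - a).
rewrite /gq /X in eX *. lia.
Qed.

Lemma block_count (M a : nat) (r : int) : (0 < M)%N ->
  (\sum_(0 <= i < M) nat_of_bool (M%:Z %| ((i + a)%N%:Z - r)%R)%Z)%N = 1%N.
Proof.
move=> hM; rewrite big_mkord.
have hMz : (0 : int) < M by rewrite ltz_nat.
set t0 := ((r - a%:Z) %% M%:Z)%Z.
have t0ge : 0 <= t0 by apply: modz_ge0; rewrite gt_eqF.
have t0lt : t0 < M%:Z by apply: ltz_pmod.
have tlt : (`|t0| < M)%N.
  by rewrite -ltz_nat gez0_abs.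
pose t := Ordinal tlt.
rewrite (bigD1 t) //= big1 ?addn0.
  suff -> : ((M%:Z %| ((`|t0| + a)%N%:Z - r)%R)%Z) by [].
    apply/dvdzP; exists (- ((r - a%:Z) %/ M%:Z)%Z).
    have := divz_eq (r - a%:Z) M%:Z. rewrite -/t0 PoszD gez0_abs //. lia.
move=> i hi.
apply/eqP; rewrite eqb0; apply/negP => hd.
move/eqP: hi; apply; apply/val_inj => /=.
have ht0 : (M%:Z %| t0 - (r - a%:Z))%Z.
  apply/dvdzP; exists (- ((r - a%:Z) %/ M%:Z)%Z).
  have := divz_eq (r - a%:Z) M%:Z. rewrite -/t0. lia.
have hi' := ltn_ord i.
have : (i : int) - t0 = 0.
  apply: (@dvd_small M%:Z _ hMz).
    move: hd ht0 => /dvdzP[u hu] /dvdzP[v hv]; apply/dvdzP; exists (u - v); rewrite PoszD in hu; lia.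
  rewrite -ltz_nat in hi'. lia.
move=> h; apply/eqP; rewrite -eqz_nat gez0_abs //. apply/eqP; lia.
Qed.

Lemma count_mod (M K : nat) (r : int) : (0 < M)%N ->
  (\sum_(0 <= x < M * K) nat_of_bool (M%:Z %| (x%:Z - r)%R)%Z)%N = K.
Proof.
move=> hM; elim: K => [|K IH]; first by rewrite muln0 big_geq.
rewrite mulnSr (@big_cat_nat _ _ _ (M * K)) ?leq_addr //= IH.
rewrite -{1}(add0n (M * K)%N) big_addn addKn.
by rewrite (block_count _ _ _ hM) addn1.
Qed.

Lemma modz_nat_lt (n : nat) (x : int) : (0 < n)%N -> (`|(x %% n)%Z| < n)%N.
Proof.
move=> hn; have hz : (0:int) < n by rewrite ltz_nat.
rewrite -ltz_nat gez0_abs; first exact: ltz_pmod.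
by apply: modz_ge0; rewrite gt_eqF.
Qed.

Lemma modz_nat_abs (n : nat) (x : int) : (0 < n)%N -> (`|(x %% n)%Z|%N : int) = (x %% n)%Z.
Proof.
move=> hn; have hz : (0:int) < n by rewrite ltz_nat.
by rewrite gez0_abs //; apply: modz_ge0; rewrite gt_eqF.
Qed.

Lemma sum_perm (n : nat) (a c : int) (F : int -> nat) : (0 < n)%N ->
  coprimez n a -> (forall x, F x = F (x %% n)%Z) ->
  (\sum_(0 <= i < n) F (a * i%:Z + c)%R)%N = (\sum_(0 <= i < n) F i%:Z)%N.
Proof.
move=> hn hco hF.
have hz : (0:int) < n by rewrite ltz_nat.
rewrite !big_mkord.
pose h (i : 'I_n) : 'I_n := Ordinal (@modz_nat_lt n (a * i%:Z + c)%R hn).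
have hinj : injective h.
  move=> i j /(congr1 val) /= /(congr1 Posz).
  rewrite !modz_nat_abs // => /eqP; rewrite eqz_mod_dvd.
  have -> : a * i + c - (a * j + c) = a * (i%:Z - j%:Z) by ring.
  rewrite Gauss_dvdzr // => hd.
  apply/val_inj/eqP; rewrite -eqz_nat; apply/eqP; change (Posz i = Posz j).
  have hi := ltn_ord i; have hj := ltn_ord j.
  rewrite -ltz_nat in hi; rewrite -ltz_nat in hj.
  have := @dvd_small n%:Z _ hz hd. move=> H. suff : i%:Z - j%:Z = 0 by lia.
  apply: H; lia.
rewrite [RHS](reindex_inj hinj) /=.
apply: eq_bigr => i _.
by rewrite /h /= modz_nat_abs // -hF.
Qed.

Lemma dvd2z (y : int) : (2 %| y)%Z = ~~ odd `|y|.
Proof. exact: (dvdn2 `|y|). Qed.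

Lemma oddz (y : int) : odd `|y| = (2 %| y - 1)%Z.
Proof.
apply/idP/idP.
  rewrite -[odd _]negbK -dvd2z => /negP hn.
  have e := divz_eq y 2.
  have h1 := modz_ge0 y (isT : (2:int) != 0).
  have h2 := ltz_pmod y (isT : (0:int) < 2).
  have [h0|h0] : (y %% 2)%Z = 0 \/ (y %% 2)%Z = 1 by lia.
    by exfalso; apply: hn; apply/dvdzP; exists (y %/ 2)%Z; lia.
  by apply/dvdzP; exists (y %/ 2)%Z; lia.
move=> /dvdzP[a ha]; rewrite -[odd _]negbK -dvd2z; apply/negP => /dvdzP[b hb].
lia.
Qed.

Lemma oddn (x : nat) : odd x = (2 %| x%:Z - 1)%Z.
Proof. by rewrite -oddz absz_nat. Qed.

Lemma co_odd (n k : nat) (a : int) : n = (2 ^ k)%N -> odd `|a| -> coprimez n a.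
Proof.
move=> -> ha; rewrite coprimezE absz_nat; apply: coprimeXl.
by rewrite coprime2n.
Qed.

Lemma card_pairs (n : nat) (P : 'I_n -> 'I_n -> bool) :
  #|[set p : 'I_n * 'I_n | P p.1 p.2]| = (\sum_(i < n) \sum_(j < n) P i j)%N.
Proof.
rewrite -sum1_card big_mkcond /= pair_bigA /=.
by apply: eq_bigr => p _; rewrite inE; case: (P _ _).
Qed.

Lemma X1 (q B : nat) (y0 c : int) : (0 < q)%N -> (0 < B)%N ->
  - (q%:Z) <= 2 * y0 < q%:Z -> ((q * B)%N%:Z %| y0 - c)%Z ->
  (\sum_(0 <= x < q * B) nat_of_bool ((q * B)%N%:Z %| (gq q x - c)%R)%Z)%N = B.
Proof.
move=> hq hB hy hc.
have hqz : (0:int) < q by rewrite ltz_nat.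
have hBz : (0:int) < B by rewrite ltz_nat.
rewrite -[RHS](@count_mod q B y0 hq).
apply: eq_bigr => x _; congr nat_of_bool.
rewrite (@dvdz_diff _ _ (gq q x - y0)); last first.
  by have -> : gq q x - c - (gq q x - y0) = y0 - c by ring.
apply/idP/idP => hd.
  have hw := gq_win q x hqz.
  have e : gq q x - y0 = 0.
    apply: (@dvd_small (q * B)%N%:Z) => //; first by rewrite ltz_nat muln_gt0 hq.
    rewrite PoszM. nia.
  have := gq_mod q x; move=> /dvdzP[a ha]; apply/dvdzP; exists a; lia.
by rewrite (@gq_char q x y0 hqz hy hd) subrr dvdz0.
Qed.
Lemma noev_even (n q y s d j l : int) : 0 < q -> (2 * q %| n)%Z ->
  (n %| d - j * q)%Z -> (2 %| j)%Z -> ~~ (n %| d)%Z -> coprimez n s ->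
  - q <= 2 * y < q -> - q <= l <= q -> ~~ (n %| y - s * d - l)%Z.
Proof.
move=> hq h2qn hdj /dvdzP[j' hj'] hnd hco hy hl; apply/negP => hE.
have h2q : (2 * q %| y - l)%Z.
  have -> : y - l = (y - s * d - l) + s * (d - j * q) + (s * j') * (2 * q).
    by rewrite hj'; ring.
  
  apply: rpredD; first apply: rpredD.
  - exact: dvdz_trans h2qn hE.
  -  exact: dvdz_mull (dvdz_trans h2qn hdj).
  - exact: dvdz_mull (dvdzz _).

have e : y - l = 0.
  apply: (@dvd_small (2 * q)) => //.
  - clear -hq; lia.
  - clear -hy hl; lia.

move/negP: hnd; apply.
rewrite -(Gauss_dvdzr _ hco).
have -> : s * d = - (y - s * d - l) + (y - l) by ring.
by rewrite e addr0 rpredN.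
Qed.

Lemma noev_odd (n q y s d j l : int) : 0 < q -> (2 * q %| n)%Z ->
  (n %| d - j * q)%Z -> (2 %| j - 1)%Z -> (2 %| s - 1)%Z ->
  - q <= 2 * y < q -> - q <= 2 * l < q -> ~~ (n %| y - s * d - l)%Z.
Proof.
move=> hq h2qn hdj /dvdzP[j' hj'] /dvdzP[s' hs'] hy hl; apply/negP => hE.
have h2q : (2 * q %| y - l - q)%Z.
  have -> : y - l - q = (y - s * d - l) + s * (d - j * q) + (s * j' + s') * (2 * q).
    have -> : j = j' * 2 + 1 by clear -hj'; lia.
    have -> : s = s' * 2 + 1 by clear -hs'; lia.
    ring.
  apply: rpredD; first apply: rpredD.
  - exact: dvdz_trans h2qn hE.
  - exact: dvdz_mull (dvdz_trans h2qn hdj).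
  - exact: dvdz_mull (dvdzz _).
have e : y - l - q = 0.
  apply: (@dvd_small (2 * q)) => //.
  - clear -hq; lia.
  - clear -hy hl; lia.
clear -e hy hl hq; lia.
Qed.

Lemma eqv_B (q B : nat) (s d j t : int) : (0 < q)%N ->
  ((q * B)%N%:Z %| d - j * q%:Z)%Z ->
  ((q * B)%N%:Z %| t * q%:Z - s * d)%Z = (B%:Z %| s * j - t)%Z.
Proof.
move=> hq hdj.
have hq0 : (q%:Z) != 0 by rewrite eqz_nat -lt0n.
rewrite (@dvdz_diff _ _ (q%:Z * (t - s * j))); last first.
  have -> : t * q%:Z - s * d - q%:Z * (t - s * j) = - (s * (d - j * q%:Z)) by ring.
  by rewrite rpredN dvdz_mull.
rewrite PoszM dvdz_mul2l //.
by rewrite -(rpredN _ (t - s * j)) opprB.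
Qed.

Lemma iii2_sum (q B : nat) (s d j l t : int) : (0 < q)%N -> (0 < B)%N ->
  ((q * B)%N%:Z %| d - j * q%:Z)%Z ->
  - (q%:Z) <= 2 * (l + t * q%:Z) < q%:Z ->
  (\sum_(0 <= x < q * B) nat_of_bool ((q * B)%N%:Z %| (gq q x - s * d - l)%R)%Z)%N
  = if (B%:Z %| s * j - t)%Z then B else 0%N.
Proof.
move=> hq hB hdj hy0.
have hqz : (0:int) < q by rewrite ltz_nat.
have key : ((q * B)%N%:Z %| (l + t * q%:Z) - s * d - l)%Z = (B%:Z %| s * j - t)%Z.
  rewrite -(@eqv_B q B s d j t hq hdj).
  by have -> : l + t * q%:Z - s * d - l = t * q%:Z - s * d by ring.
case: ifP => hBd.
  have H : ((q * B)%N%:Z %| l + t * q%:Z - (s * d + l))%Z.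
    by rewrite -key in hBd; have -> : l + t * q%:Z - (s * d + l) = l + t * q%:Z - s * d - l by ring.
  etransitivity; last exact: (@X1 q B (l + t * q%:Z) (s * d + l) hq hB hy0 H).
  by apply: eq_bigr => x _; rewrite opprD addrA.
rewrite big1_seq // => x _; apply/eqP; rewrite eqb0; apply/negP => hE.
move/negP: hBd; apply; rewrite -key.
have hw := gq_win q x hqz.
have hqn : (q%:Z %| (q * B)%N%:Z)%Z by rewrite PoszM dvdz_mulr.
have hy : gq q x = l + t * q%:Z.
  have hd : (q%:Z %| gq q x - (l + t * q%:Z))%Z.
    have -> : gq q x - (l + t * q%:Z) = (gq q x - s * d - l) + s * (d - j * q%:Z) + (s * j - t) * q%:Z by ring.
    apply: rpredD; first apply: rpredD.
    - exact: dvdz_trans hqn hE.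
    - exact: dvdz_mull (dvdz_trans hqn hdj).
    - exact: dvdz_mull (dvdzz _).
  have := @dvd_small q%:Z _ hqz hd.
  move=> H; suff : gq q x - (l + t * q%:Z) = 0 by move=> h0; clear -h0; lia.
  apply: H. clear -hw hy0; lia.
by rewrite -hy.
Qed.

Lemma odd_mulz (u s : int) : (2 %| u - 1)%Z -> (2 %| u * s - 1)%Z = (2 %| s - 1)%Z.
Proof. by rewrite -!oddz abszM oddM => ->. Qed.

Lemma Nc (p n1 : nat) (u c : int) : (0 < p)%N -> (0 < n1)%N -> (2 %| n1)%N ->
  (2 %| u - 1)%Z -> coprimez (p * n1)%N u ->
  (\sum_(0 <= s < p * n1) nat_of_bool ((2 %| (s%:Z - 1)%R)%Z &&
        ((p * n1)%N%:Z %| (c - s%:Z * (p%:Z * u))%R)%Z))%N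
  = if (2 * p%:Z %| c - p%:Z)%Z then p else 0%N.
Proof.
move=> hp hn1 h2n1 hu hco.
have hnpos : (0 < p * n1)%N by rewrite muln_gt0 hp.
pose F (z : int) : nat := nat_of_bool ((2 %| z - 1)%Z && ((p * n1)%N%:Z %| (c - z * p%:Z)%R)%Z).
have h2n : (2 %| (p * n1)%N%:Z)%Z.
  by rewrite PoszM; apply: dvdz_mull; rewrite /dvdz absz_nat.
have hF : forall z, F z = F (z %% (p * n1)%N)%Z.
  move=> z; rewrite /F; congr (nat_of_bool (_ && _)).
    apply: dvdz_diff; have -> : z - 1 - ((z %% (p * n1)%N)%Z - 1) = (z %/ (p * n1)%N)%Z * (p * n1)%N%:Z.
      by have := divz_eq z (p * n1)%N; clear; lia.
    exact: dvdz_mull.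
  apply: dvdz_diff; have -> : c - z * p%:Z - (c - (z %% (p * n1)%N)%Z * p%:Z) = - ((z %/ (p * n1)%N)%Z * p%:Z) * (p * n1)%N%:Z.
    by have := divz_eq z (p * n1)%N; move=> e; rewrite {1}e; ring.
  exact: dvdz_mull (dvdzz _).
have hP : (\sum_(0 <= i < p * n1) F (u * i%:Z)%R)%N = (\sum_(0 <= i < p * n1) F i%:Z)%N.
  rewrite -(@sum_perm (p * n1)%N u 0 F hnpos hco hF).
  by apply: eq_bigr => i _; rewrite addr0.
transitivity (\sum_(0 <= i < p * n1) F (u * i%:Z)%R)%N.
  apply: eq_bigr => i _; rewrite /F odd_mulz //.
  by have -> : c - i%:Z * (p%:Z * u) = c - u * i%:Z * p%:Z by ring.
rewrite hP /F.
case: ifP => hc.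
  move/dvdzP: hc => [e he].
  have hcE : c = p%:Z * (2 * e + 1) by clear -he; lia.
  rewrite mulnC.
  rewrite -[RHS](@count_mod n1 p (2 * e + 1) hn1).
  apply: eq_bigr => s _; congr nat_of_bool.
  rewrite hcE.
  have -> : p%:Z * (2 * e + 1) - s%:Z * p%:Z = p%:Z * (2 * e + 1 - s%:Z) by ring.
  rewrite mulnC PoszM dvdz_mul2l ?eqz_nat -?lt0n //.
  have -> : (n1%:Z %| 2 * e + 1 - s%:Z)%Z = (n1%:Z %| s%:Z - (2 * e + 1))%Z.
    by rewrite -(rpredN _ (2 * e + 1 - s%:Z)) opprB.
  apply/andb_idl => /dvdzP[k hk].
  move/dvdnP: h2n1 => [m hm].
  apply/dvdzP; exists (e + m%:Z * k).
  have hm' : n1%:Z = m%:Z * 2 by rewrite hm PoszM.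
  rewrite hm' in hk. clear -hk. lia.
rewrite big1_seq // => s _; apply/eqP; rewrite eqb0; apply/negP => /andP[/dvdzP[a ha] hd].
move/negP: hc; apply.
have h2pn : (2 * p%:Z %| (p * n1)%N%:Z)%Z.
  move/dvdnP: h2n1 => [m hm]; apply/dvdzP; exists m%:Z; rewrite hm !PoszM; ring.
have -> : c - p%:Z = (c - s%:Z * p%:Z) + a * (2 * p%:Z).
  have -> : s%:Z = a * 2 + 1 by clear -ha; lia.
  ring.
apply: rpredD; first exact: dvdz_trans h2pn hd.
exact: dvdz_mull (dvdzz _).
Qed.

Lemma sum_b (q B : nat) (s : nat) (f f' : nat) (l : int) : (0 < q)%N -> (0 < B)%N ->
  coprimez (q * B)%N s ->
  (\sum_(0 <= b < q * B) nat_of_bool ((q * B)%N%:Z %|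
      (gq q (perm_pi (q * B)%N s b f) - s%:Z * (f%:Z - f'%:Z) - l)%R)%Z)%N =
  (\sum_(0 <= x < q * B) nat_of_bool ((q * B)%N%:Z %|
      (gq q x%:Z - s%:Z * (f%:Z - f'%:Z) - l)%R)%Z)%N.
Proof.
move=> hq hB hco.
have hqz : (0:int) < q by rewrite ltz_nat.
have hnpos : (0 < q * B)%N by rewrite muln_gt0 hq.
pose F (z : int) : nat := nat_of_bool ((q * B)%N%:Z %| (gq q z - s%:Z * (f%:Z - f'%:Z) - l)%R)%Z.
have hqn : (q%:Z %| (q * B)%N%:Z)%Z by rewrite PoszM dvdz_mulr.
have hF : forall z, F z = F (z %% (q * B)%N)%Z.
  move=> z; rewrite /F (@gq_congr q z ((z %% (q * B)%N)%Z)) //.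
  apply: dvdz_trans hqn _; apply/dvdzP; exists (z %/ (q * B)%N)%Z.
  by have := divz_eq z (q * B)%N; clear; lia.
have hco' : coprimez (q * B)%N (- s%:Z) by rewrite coprimezN.
rewrite -(@sum_perm (q * B)%N (- s%:Z) (s%:Z * f%:Z) F hnpos hco' hF).
have hF2 : forall a c, ((q * B)%N%:Z %| a - c)%Z -> F a = F c.
  move=> a c hac; rewrite /F (@gq_congr q a c) //; exact: dvdz_trans hqn hac.
apply: eq_bigr => b _; rewrite /perm_pi -/(F _); apply: hF2.
apply/dvdzP; exists (- ((s%:Z * (f%:Z - b%:Z)) %/ (q * B)%N)%Z).
have := divz_eq (s%:Z * (f%:Z - b%:Z)) (q * B)%N; clear; lia.
Qed.

Lemma sum_odd (H : nat) : (\sum_(0 <= s < 2 * H) odd s)%N = H.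
Proof.
rewrite -[RHS](@count_mod 2 H 1) //.
by apply: eq_bigr => s _; rewrite oddn.
Qed.

Lemma prob_formula (q B H : nat) (f f' : nat) (l : int) :
  (0 < q)%N -> (0 < B)%N -> (q * B = 2 * H)%N ->
  (forall a : nat, odd a -> coprimez (q * B)%N a) ->
  prob_offset (q * B) B f f' l =
  (\sum_(0 <= s < q * B) \sum_(0 <= x < q * B) nat_of_bool ((2 %| (s%:Z - 1)%R)%Z &&
     ((q * B)%N%:Z %| (gq q x%:Z - s%:Z * (f%:Z - f'%:Z) - l)%R)%Z))%N%:R
  / (H * (q * B))%:R.
Proof.
move=> hq hB hH hco.
rewrite /prob_offset.
have -> : [set p in sample_space (q * B) | offset_sym (q * B) B f p.1 p.2 f' == symrep (q * B) l]
  = [set p : 'I_(q * B) * 'I_(q * B) | odd p.1 && (offset_sym (q * B) B f p.1 p.2 f' == symrep (q * B) l)].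
  by apply/setP => p; rewrite !inE.
have -> : sample_space (q * B) = [set p : 'I_(q * B) * 'I_(q * B) | odd p.1].
  by apply/setP => p; rewrite !inE.
rewrite (@card_pairs _ (fun i j : 'I_(q * B) => odd i && (offset_sym (q * B) B f i j f' == symrep (q * B) l))).
rewrite (@card_pairs _ (fun i j : 'I_(q * B) => odd i)).
congr (_%:R / _%:R).
  rewrite -(big_mkord xpredT (fun s => \sum_(j < q * B) nat_of_bool (odd s && (offset_sym (q * B) B f s j f' == symrep (q * B) l)))%N).
  apply: eq_bigr => s _.
  rewrite -(big_mkord xpredT (fun j => nat_of_bool (odd s && (offset_sym (q * B) B f s j f' == symrep (q * B) l)))).
  rewrite -oddn; case hs: (odd s); last by rewrite !big1_seq.
  rewrite -(@sum_b q B s f f' l hq hB (hco s hs)).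
  by apply: eq_bigr => b _; rewrite event_eq.
under eq_bigr do rewrite sum_nat_const card_ord.
rewrite -big_distrr /=.
rewrite -(big_mkord xpredT (fun i => nat_of_bool (odd i))) hH sum_odd.
by rewrite mulnC.
Qed.

Theorem lemma5p5 (n B : nat)
  (Hn : exists k : nat, n = (2 ^ k)%N) (HB : exists m : nat, B = (2 ^ m)%N)
  (H2B : (2 <= B)%N) (HBn : (B <= n)%N)
  (f f' : nat) (Hf : (f < n)%N) (Hf' : (f' < n)%N) (Hff' : f <> f') :
  (* (i) *)
  (~~ ((n %/ B)%N%:Z %| (f%:Z - f'%:Z))%Z ->
     forall l : int, - (n %/ 2)%N%:Z <= l < (n %/ 2)%N%:Z ->
       prob_offset n B f f' l = 1 / n%:R)
  /\
  (* (ii) *)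
  (forall j : int, (f%:Z - f'%:Z == j * (n %/ B)%N%:Z %[mod n%:Z])%Z -> ~~ odd `|j|%N ->
     forall l : int, - (n %/ B)%N%:Z <= l <= (n %/ B)%N%:Z ->
       prob_offset n B f f' l = 0)
  /\
  (* (iii) *)
  (forall j : int, (f%:Z - f'%:Z == j * (n %/ B)%N%:Z %[mod n%:Z])%Z -> odd `|j|%N ->
     (forall l : int, - n%:Z <= (2 * B)%N%:Z * l < n%:Z ->
        prob_offset n B f f' l = 0)
     /\
     (forall l : int,
        (- n%:Z <= B%:Z * l /\ (2 * B)%N%:Z * l < - n%:Z) \/
        (n%:Z <= (2 * B)%N%:Z * l /\ B%:Z * l <= n%:Z) ->
        prob_offset n B f f' l = 2 / n%:R)).
Proof.
case: Hn => k hk; case: HB => m hm.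
have hm1 : (1 <= m)%N.
  by move: H2B; rewrite hm; case: m {hm} => //.
have hmk : (m <= k)%N by move: HBn; rewrite hk hm leq_exp2l.
have hk1 : (1 <= k)%N by apply: leq_trans hm1 hmk.
have [q hqdef] : exists q, q = (2 ^ (k - m))%N by eexists.
have hnq : n = (q * B)%N by rewrite hk hm hqdef -expnD subnK.
have hq : (0 < q)%N by rewrite hqdef expn_gt0.
have hB0 : (0 < B)%N by rewrite hm expn_gt0.
have hdivq : (n %/ B)%N = q by rewrite hnq mulnK.
rewrite hdivq.
have [H hHdef] : exists H, H = (2 ^ (k - 1))%N by eexists.
have hH : (q * B = 2 * H)%N by rewrite -hnq hk hHdef -{2}(expn1 2) -expnD subnKC.
have hco : forall a : nat, odd a -> coprimez (q * B)%N a.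
  by move=> a ha; rewrite -hnq; apply: (@co_odd n k) => //; rewrite absz_nat.
have hcoz : forall a : int, (2 %| a - 1)%Z -> coprimez (q * B)%N a.
  by move=> a ha; rewrite -hnq; apply: (@co_odd n k) => //; rewrite oddz.
have hB2 : (2 %| B)%N by rewrite hm -{1}(expn1 2) dvdn_exp2l.
have hqBk : (q * B)%N = (2 ^ k)%N by rewrite -hnq hk.
clear hk hdivq HBn. subst n.
set d := f%:Z - f'%:Z.
have hd0 : ~~ ((q * B)%N%:Z %| d)%Z.
  apply/negP => hd.
  have : d = 0.
    apply: (@dvd_small (q * B)%N%:Z) => //; first by rewrite ltz_nat muln_gt0 hq.
    rewrite -!ltz_nat in Hf Hf'. rewrite /d; clear -Hf Hf'; lia.
  by rewrite /d => e; apply: Hff'; apply/eqP; rewrite -eqz_nat; apply/eqP; clear -e; lia.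
have h2qn : (2 * q%:Z %| (q * B)%N%:Z)%Z.
  by move/dvdnP: hB2 => [c hc]; apply/dvdzP; exists c%:Z; rewrite hc !PoszM; ring.
split; last split.
- move=> hi l _.
  rewrite (@prob_formula q B H f f' l hq hB0 hH hco).
  have hqz : (0:int) < q by rewrite ltz_nat.
  have hH0 : (0 < H)%N by rewrite hHdef expn_gt0.
  have hdpos : (0 < `|d|)%N.
    rewrite absz_gt0; apply/negP => /eqP d0; move/negP: hd0; apply.
    by rewrite d0 dvdz0.
  have [m' hm' hdm] := pfactor_coprime (isT : prime 2) hdpos.
  set a := logn 2 `|d| in hdm.
  have hab : (a.+1 <= k - m)%N.
    rewrite ltnNge; apply/negP => hba; move/negP: hi; apply.
    change (q %| `|d|)%N; rewrite hdm hqdef; apply: dvdn_mull; exact: dvdn_exp2l.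
  have hak : (a.+1 <= k)%N by apply: leq_trans hab (leq_subr _ _).
  pose p := (2 ^ a)%N.
  have hp : (0 < p)%N by rewrite expn_gt0.
  pose u : int := if 0 <= d then m'%:Z else - m'%:Z.
  have hdu : d = p%:Z * u.
    rewrite /u; case: (lerP 0 d) => hd.
      by rewrite -{1}(gez0_abs hd) hdm PoszM mulrC.
    by rewrite -{1}[d]opprK -(ltz0_abs hd) hdm PoszM mulrC mulrN.
  have hu : (2 %| u - 1)%Z.
    by rewrite -oddz /u; case: ifP => _; rewrite ?abszN absz_nat -coprime2n.
  pose n1 := (2 ^ (k - a))%N.
  have hn1 : (q * B)%N = (p * n1)%N by rewrite hqBk /p /n1 -expnD subnKC // ltnW.
  have hn1pos : (0 < n1)%N by rewrite expn_gt0.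
  have h2n1 : (2 %| n1)%N by rewrite /n1 -{1}(expn1 2) dvdn_exp2l // subn_gt0.
  pose n2 := (2 ^ (k - a.+1))%N.
  have hn2 : (q * B)%N = ((2 * p) * n2)%N.
    by rewrite hqBk /p /n2 -expnS -expnD subnKC.
  have hHn2 : H = (n2 * p)%N.
    apply/eqP; rewrite -(eqn_pmul2l (isT : (0 < 2)%N)) -hH hn2. by rewrite [(n2 * p)%N]mulnC mulnA.
  have h2pq : ((2 * p)%N%:Z %| q%:Z)%Z.
    by change (2 * p %| q)%N; rewrite hqdef /p -expnS dvdn_exp2l.
  have hcou : coprimez (p * n1)%N u by rewrite -hn1; apply: hcoz.
  set S := (\sum_(_ <= _ < _) _)%N.
  have -> : S = H.
    rewrite /S exchange_big /=.
    transitivity (\sum_(0 <= x < q * B) nat_of_bool ((2 * p)%N%:Z %| (x%:Z - (l + p%:Z))%R)%Z * p)%N.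
      apply: eq_bigr => x _.
      transitivity (\sum_(0 <= s < p * n1) nat_of_bool ((2 %| (s%:Z - 1)%R)%Z && ((p * n1)%N%:Z %| ((gq q x%:Z - l) - s%:Z * (p%:Z * u))%R)%Z))%N.
        rewrite -hn1; apply: eq_bigr => s _; rewrite -/d hdu.
        by have -> : gq q x%:Z - s%:Z * (p%:Z * u) - l = (gq q x%:Z - l) - s%:Z * (p%:Z * u) by ring.
      rewrite (@Nc p n1 u (gq q x%:Z - l) hp hn1pos h2n1 hu hcou).
      have -> : (2 * p%:Z %| gq q x%:Z - l - p%:Z)%Z = ((2 * p)%N%:Z %| x%:Z - (l + p%:Z))%Z.
        rewrite PoszM; apply: dvdz_diff.
        have -> : gq q x%:Z - l - p%:Z - (x%:Z - (l + p%:Z)) = - (x%:Z - gq q x%:Z) by ring.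
        rewrite rpredN; apply: dvdz_trans (gq_mod q x).
        by rewrite -PoszM.
      by case: ((_ %| _)%Z); rewrite ?mul1n ?mul0n.
    rewrite -big_distrl /= hn2 (@count_mod (2 * p) n2 (l + p%:Z)) ?muln_gt0 //.
  have hqB0 : (0 < q * B)%N by rewrite muln_gt0 hq.
  rewrite natrM; field.
  by rewrite !pnatr_eq0 -!lt0n hH0 hq hB0.
- move=> j hj hje l hl.
  rewrite (@prob_formula q B H f f' l hq hB0 hH hco).
  rewrite big1_seq ?mul0r // => s _; rewrite big1_seq // => x _.
  apply/eqP; rewrite eqb0; apply/negP => /andP[hs hE].
  move: hE; apply/negP.
  rewrite eqz_mod_dvd in hj.
  apply: (@noev_even _ q%:Z _ s%:Z d j l) => //.
  + by rewrite dvd2z.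
  + exact: hcoz.
  + apply: gq_win; by rewrite ltz_nat.
- move=> j hj hjo; rewrite eqz_mod_dvd in hj; split.
  + move=> l hl.
    rewrite (@prob_formula q B H f f' l hq hB0 hH hco).
    rewrite big1_seq ?mul0r // => s _; rewrite big1_seq // => x _.
    apply/eqP; rewrite eqb0; apply/negP => /andP[hs hE].
    move: hE; apply/negP.
    apply: (@noev_odd _ q%:Z _ s%:Z d j l) => //.
    * by rewrite -oddz.
    * apply: gq_win; by rewrite ltz_nat.
    * have hBz : (0:int) < B by rewrite ltz_nat.
      rewrite !PoszM in hl; clear -hl hBz; nia.
  + move=> l hl.
    rewrite (@prob_formula q B H f f' l hq hB0 hH hco).
    have hBz : (0:int) < B by rewrite ltz_nat.
    have hH0 : (0 < H)%N by rewrite hHdef expn_gt0.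
    have [t [ht hwin]] : exists t : int, (t = 1 \/ t = -1) /\ - q%:Z <= 2 * (l + t * q%:Z) < q%:Z.
      case: hl => [[h1 h2]|[h1 h2]]; [exists 1 | exists (-1)]; (split; first by [left|right]).
      + rewrite !PoszM in h1 h2.
        have e1 : - q%:Z <= l by clear -h1 hBz; nia.
        have e2 : 2 * l < - q%:Z by clear -h2 hBz; nia.
        clear -e1 e2; lia.
      + rewrite !PoszM in h1 h2.
        have e1 : q%:Z <= 2 * l by clear -h1 hBz; nia.
        have e2 : l <= q%:Z by clear -h2 hBz; nia.
        have hqz : (0:int) < q by rewrite ltz_nat.
        clear -e1 e2 hqz; lia.
    have hj1 : (2 %| j - 1)%Z by rewrite -oddz.
    set S := (\sum_(_ <= _ < _) _)%N.
    have -> : S = (q * B)%N.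
      rewrite /S.
      transitivity (\sum_(0 <= s < q * B) nat_of_bool ((2 %| (s%:Z - 1)%R)%Z && (B%:Z %| (s%:Z * j - t)%R)%Z) * B)%N.
        apply: eq_bigr => s _; case hs : (2 %| (s%:Z - 1)%R)%Z => /=.
          rewrite (@iii2_sum q B s%:Z d j l t hq hB0 hj hwin).
          by case: ((B%:Z %| s%:Z * j - t)%Z); rewrite ?mul1n ?mul0n.
        by rewrite sum_nat_const_nat muln0.
      rewrite -big_distrl /=; congr (_ * _)%N.
      pose G (z : int) : nat := nat_of_bool ((2 %| z - 1)%Z && (B%:Z %| z - t)%Z).
      have hnpos : (0 < q * B)%N by rewrite muln_gt0 hq.
      have hBn : (B%:Z %| (q * B)%N%:Z)%Z by rewrite PoszM dvdz_mull.
      have h2n : (2 %| (q * B)%N%:Z)%Z.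
        by apply: dvdz_trans h2qn; apply: dvdz_mulr.
      have hG : forall z, G z = G (z %% (q * B)%N)%Z.
        move=> z; rewrite /G.
        have e : ((q * B)%N%:Z %| z - (z %% (q * B)%N)%Z)%Z.
          apply/dvdzP; exists (z %/ (q * B)%N)%Z.
          by have := divz_eq z (q * B)%N; clear; lia.
        congr (nat_of_bool (_ && _)); apply: dvdz_diff.
          have -> : z - 1 - ((z %% (q * B)%N)%Z - 1) = z - (z %% (q * B)%N)%Z by ring.
          exact: dvdz_trans h2n e.
        have -> : z - t - ((z %% (q * B)%N)%Z - t) = z - (z %% (q * B)%N)%Z by ring.
        exact: dvdz_trans hBn e.
      have := @sum_perm (q * B)%N j 0 G hnpos (hcoz j hj1) hG.
      have -> : (\sum_(0 <= i < q * B) G (j * i%:Z + 0)%R)%N =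
          (\sum_(0 <= s < q * B) nat_of_bool ((2 %| (s%:Z - 1)%R)%Z && (B%:Z %| (s%:Z * j - t)%R)%Z))%N.
        by apply: eq_bigr => i _; rewrite /G addr0 odd_mulz // mulrC.
      move=> ->.
      rewrite mulnC -[RHS](@count_mod B q t hB0) mulnC.
      apply: eq_bigr => s _; rewrite /G; congr nat_of_bool.
      apply/andb_idl => /dvdzP[a ha].
      move/dvdnP: hB2 => [b hb].
      apply/dvdzP; case: ht => ht; [exists (a * b%:Z) | exists (a * b%:Z - 1)];
        rewrite hb PoszM in ha; rewrite ht in ha; clear -ha; lia.
    rewrite hH !natrM; field.
    by rewrite pnatr_eq0 -lt0n.
Qed.
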